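(* Let $\ell\in\mathbb{N}$, $h\in\bigwedge(V_{2\ell}^* )$, let $G$ be an Eulerian graph and $\phi:E(G)\to[\ell]$. Then $s_{h,\phi}(G,\omega,\kappa)$ has the same value for all Eulerian orientations $\omega$ of $G$ and all local orderings $\kappa$ compatible with $\omega$. (Consequently, since $s_h((G,\omega,\kappa))=\sum_{\phi:E(G)\to[\ell]}s_{h,\phi}(G,\omega,\kappa)$, the same holds for $s_h((G,\omega,\kappa))$.)
   Context: Setup: $V_{2\ell}=\mathbb{C}^{2\ell}$ with standard basis $e_1,\dots,e_{2\ell}$; $f_i=-e_{i+\ell}$ for $i\le\ell$, $f_i=e_{i-\ell}$ for $i>\ell$. $\bigwedge(V_{2\ell}^* )=\bigoplus_{n=0}^{2\ell}\bigwedge^n(V_{2\ell}^* )$, and $h$ applied to an $n$-fold tensor means its skew-symmetric component $h^n$ applied to it. Graphs may have loops and multiple edges; Eulerian means every vertex has even degree. An Eulerian orientation $\omega$ makes in-degree equal out-degree at each vertex (a loop gives one incoming and one outgoing arc). A compatible local ordering $\kappa$ consists at each vertex $v$ of degree $d(v)$ of bijections $\kappa_v^-:\delta^-(v)\to\{1,3,\dots,d(v)-1\}$ and $\kappa_v^+:\delta^+(v)\to\{2,4,\dots,d(v)\}$; $\kappa_v^{-1}(i)$ is the arc at $v$ with label $i$. The $\kappa$-circuits are the closed walks $(v_1,a_1,\dots,a_i,v_i,a_{i+1},\dots,v_1)$ with $\kappa^-_{v_i}(a_i)+1=\kappa^+_{v_i}(a_{i+1})$ into which $\kappa$ decomposes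 the edge set; $c(G,\kappa)$ is their number. For $\phi:E(G)\to[\ell]$, $s_{h,\phi}(G,\omega,\kappa)=(-1)^{c(G,\kappa)}\sum_{\psi:E(G)\to\{0,\ell\}}\prod_{v\in V(G)} h\big(\bigotimes_{i=1,3,\dots,d(v)-1} e_{(\phi+\psi)(\kappa_v^{-1}(i))}\otimes f_{(\phi+\psi)(\kappa_v^{-1}(i+1))}\big)$, and $s_h((G,\omega,\kappa))$ is the same expression with the sum over all $\phi':E(G)\to[2\ell]$ in place of $\phi+\psi$. *)

(* Defs.v *)
From HB Require Import structures.
From mathcomp Require Import all_boot all_order all_algebra all_fingroup all_field.
Set Implicit Arguments. Unset Strict Implicit. Unset Printing Implicit Defensive.
Import Order.TTheory GRing.Theory Num.Theory.
Local Open Scope ring_scope.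

(* Standard basis vector e_k (0-based index k : nat, k < 2l); e_k = 0 if k >= 2l *)
Definition evec (R : nzRingType) (l k : nat) : 'rV[R]_(2 * l) :=
  \row_(j < 2 * l) ((j : nat) == k)%:R.

Definition fvec (R : nzRingType) (l k : nat) : 'rV[R]_(2 * l) :=
  if (k < l)%N then - evec R l (k + l) else evec R l (k - l).

Definition upd (R : nzRingType) (l n : nat) (x : {ffun 'I_n -> 'rV[R]_(2 * l)})
  (k : 'I_n) (u : 'rV[R]_(2 * l)) : {ffun 'I_n -> 'rV[R]_(2 * l)} :=
  [ffun j => if j == k then u else x j].

Definition multilinear (R : nzRingType) (l n : nat)
  (g : {ffun 'I_n -> 'rV[R]_(2 * l)} -> R) : Prop :=
  forall (x : {ffun 'I_n -> 'rV[R]_(2 * l)}) (k : 'I_n) (a : R) (u v : 'rV[R]_(2 * l)),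
    g (upd x k (a *: u + v)) = a * g (upd x k u) + g (upd x k v).

Definition alternating (R : nzRingType) (l n : nat)
  (g : {ffun 'I_n -> 'rV[R]_(2 * l)} -> R) : Prop :=
  forall (x : {ffun 'I_n -> 'rV[R]_(2 * l)}) (i j : 'I_n), i != j -> x i = x j -> g x = 0.

(* h in /\(V^* ): a family (h^n)_n of alternating multilinear n-forms
   (for n > 2l these are automatically 0). *)
Definition exterior_form (R : nzRingType) (l : nat)
  (h : forall n : nat, {ffun 'I_n -> 'rV[R]_(2 * l)} -> R) : Prop :=
  forall n, multilinear (h n) /\ alternating (h n).

(* A (multi)graph with loops: vertex set V, edge set E, each edge e has
   ends end1 e, end2 e (equal for a loop). *)

Definition deg (V E : finType) (end1 end2 : E -> V) (v : V) : nat :=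
  (#|[set e | end1 e == v]| + #|[set e | end2 e == v]|)%N.

Definition eulerian (V E : finType) (end1 end2 : E -> V) : Prop :=
  forall v, ~~ odd (deg end1 end2 v).

Definition tail (V E : finType) (end1 end2 : E -> V) (om : E -> bool) (e : E) : V :=
  if om e then end1 e else end2 e.
Definition head (V E : finType) (end1 end2 : E -> V) (om : E -> bool) (e : E) : V :=
  if om e then end2 e else end1 e.

Definition eulerian_orientation (V E : finType) (end1 end2 : E -> V) (om : E -> bool) : Prop :=
  forall v, #|[set e | head end1 end2 om e == v]| = #|[set e | tail end1 end2 om e == v]|.

(* Since each arc enters exactly
   one vertex (its head) and leaves exactly one vertex (its tail), the family
   (kappa^-_v)_v is encoded by kin : E -> nat (label of the arc at its head),
   and (kappa^+_v)_v by kout : E -> nat (label of the arc at its tail).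
   kappa^-_v : delta^-(v) -> {1,3,...,d(v)-1} bijective,
   kappa^+_v : delta^+(v) -> {2,4,...,d(v)}   bijective. *)
Definition compatible_ordering (V E : finType) (end1 end2 : E -> V) (om : E -> bool)
  (kin kout : E -> nat) : Prop :=
  forall v : V,
    let d := deg end1 end2 v in
    {in [set e | head end1 end2 om e == v] &, injective kin} /\
    (forall e, head end1 end2 om e = v -> odd (kin e) /\ (kin e < d)%N) /\
    (forall i, odd i -> (i < d)%N -> exists e, head end1 end2 om e = v /\ kin e = i) /\
    {in [set e | tail end1 end2 om e == v] &, injective kout} /\
    (forall e, tail end1 end2 om e = v -> ~~ odd (kout e) /\ (0 < kout e <= d)%N) /\
    (forall i, ~~ odd i -> (0 < i <= d)%N -> exists e, tail end1 end2 om e = v /\ kout e = i).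

Definition arc_at (V E : finType) (end1 end2 : E -> V) (om : E -> bool)
  (kin kout : E -> nat) (v : V) (i : nat) : option E :=
  if odd i then [pick e | (head end1 end2 om e == v) && (kin e == i)]
  else [pick e | (tail end1 end2 om e == v) && (kout e == i)].

Definition ksucc (V E : finType) (end1 end2 : E -> V) (om : E -> bool)
  (kin kout : E -> nat) (a : E) : E :=
  odflt a [pick b | (tail end1 end2 om b == head end1 end2 om a) && (kout b == (kin a).+1)].

Definition ncircuits (V E : finType) (end1 end2 : E -> V) (om : E -> bool)
  (kin kout : E -> nat) : nat :=
  #|[set [set b | fconnect (ksucc end1 end2 om kin kout) a b] | a : E]|.

(* Indices are 0-based: phi : E -> 'I_l stands for [l] = {1..l}, and
   psi : E -> bool stands for E -> {0, l} (true |-> l).  The index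
   (phi + psi)(e) in [2l] is phi e + l * psi e (0-based). *)
Definition vec_of (R : nzRingType) (l : nat) (E : finType) (g : E -> 'rV[R]_(2 * l))
  (o : option E) : 'rV[R]_(2 * l) :=
  if o is Some e then g e else 0.

(* The d(v)-fold tensor  (x) _{i=1,3,..,d-1} e_{..(kappa^-1(i))} (x) f_{..(kappa^-1(i+1))};
   argument j (0-based) carries label j+1. *)
Definition local_args (R : nzRingType) (l : nat) (V E : finType) (end1 end2 : E -> V)
  (om : E -> bool) (kin kout : E -> nat) (idx : E -> nat) (v : V)
  : {ffun 'I_(deg end1 end2 v) -> 'rV[R]_(2 * l)} :=
  [ffun j : 'I_(deg end1 end2 v) =>
     if odd j then vec_of (fun e => fvec R l (idx e)) (arc_at end1 end2 om kin kout v j.+1)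
     else vec_of (fun e => evec R l (idx e)) (arc_at end1 end2 om kin kout v j.+1)].

Definition s_hphi (R : nzRingType) (l : nat)
  (h : forall n : nat, {ffun 'I_n -> 'rV[R]_(2 * l)} -> R)
  (V E : finType) (end1 end2 : E -> V) (phi : E -> 'I_l)
  (om : E -> bool) (kin kout : E -> nat) : R :=
  (-1) ^+ ncircuits end1 end2 om kin kout *
  \sum_(psi : {ffun E -> bool})
    \prod_(v : V)
      h (deg end1 end2 v)
        (@local_args R l V E end1 end2 om kin kout (fun e => (phi e + l * psi e)%N) v).

(* Main.v *)
Require Import Defs.
From HB Require Import structures.
From mathcomp Require Import all_boot all_order all_algebra all_fingroup all_field.
From mathcomp Require Import ring.
Set Implicit Arguments. Unset Strict Implicit. Unset Printing Implicit Defensive.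
Import Order.TTheory GRing.Theory Num.Theory.
Local Open Scope ring_scope.

Section Alg.
Variables (R : comNzRingType) (l n : nat).
Variable g : {ffun 'I_n -> 'rV[R]_(2 * l)} -> R.
Hypothesis Hm : multilinear g.

Lemma g_upd0 x k : g (upd x k 0) = 0.
Proof.
have := Hm x k 1 0 0; rewrite scaler0 addr0 mul1r => E.
by apply: (@addrI _ (g (upd x k 0))); rewrite addr0 -E.
Qed.

Lemma g_scale x k a u : g (upd x k (a *: u)) = a * g (upd x k u).
Proof. by have := Hm x k a u 0; rewrite addr0 g_upd0 addr0. Qed.

Lemma g_add x k u v : g (upd x k (u + v)) = g (upd x k u) + g (upd x k v).
Proof. by have := Hm x k 1 u v; rewrite scale1r mul1r. Qed.

Lemma upd_id (x : {ffun 'I_n -> 'rV[R]_(2 * l)}) k : upd x k (x k) = x.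
Proof. by apply/ffunP => j; rewrite ffunE; case: eqP => // ->. Qed.

Lemma g_scale_all (c : 'I_n -> R) (x : {ffun 'I_n -> 'rV[R]_(2 * l)}) :
  g [ffun m => c m *: x m] = (\prod_m c m) * g x.
Proof.
suff H : forall s, uniq s ->
  g [ffun m => if m \in s then c m *: x m else x m] = (\prod_(m <- s) c m) * g x.
  have := H (enum 'I_n) (enum_uniq _); rewrite big_enum /=.
  by under eq_ffun do rewrite mem_enum.
elim=> [_|a s IH /= /andP[nas us]].
  by rewrite big_nil mul1r; congr g; apply/ffunP => m; rewrite !ffunE.
pose F : {ffun 'I_n -> 'rV[R]_(2 * l)} := [ffun m => if m \in s then c m *: x m else x m].
have -> : [ffun m => if m \in a :: s then c m *: x m else x m]
   = upd F a (c a *: F a).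
  apply/ffunP => m; rewrite !ffunE inE.
  by case: eqP => [->|]; rewrite ?(negbTE nas) ?eqxx //= => /eqP /negbTE ->.
by rewrite g_scale upd_id IH // big_cons mulrA.
Qed.

Hypothesis Ha : alternating g.

Lemma g_swap (x : {ffun 'I_n -> 'rV[R]_(2 * l)}) (i j : 'I_n) : i != j ->
  g [ffun m => x (tperm i j m)] = - g x.
Proof.
move=> nij.
pose Y a b := [ffun m => if m == i then a else if m == j then b else x m].
have Y1 a a' b : upd (Y a' b) i a = Y a b.
  by apply/ffunP => m; rewrite !ffunE; case: eqP.
have Y2 a b b' : upd (Y a b') j b = Y a b.
  apply/ffunP => m; rewrite !ffunE; case: (m =P j) => [->|//].
  by rewrite eq_sym (negbTE nij).
have Ad1 u w b : g (Y (u + w) b) = g (Y u b) + g (Y w b).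
  by rewrite -(Y1 _ u) g_add !Y1.
have Ad2 a u w : g (Y a (u + w)) = g (Y a u) + g (Y a w).
  by rewrite -(Y2 _ _ u) g_add !Y2.
have Z a : g (Y a a) = 0.
  apply: (Ha nij); rewrite !ffunE eqxx eq_sym (negbTE nij) eqxx //.
have := Z (x i + x j); rewrite Ad1 !Ad2 !Z add0r addr0.
have -> : Y (x i) (x j) = x.
  by apply/ffunP => m; rewrite !ffunE; case: (m =P i) => [->|_] //; case: (m =P j) => // ->.
have -> : Y (x j) (x i) = [ffun m => x (tperm i j m)].
  apply/ffunP => m; rewrite !ffunE; case: tpermP => [->|->|/eqP ? /eqP ?].
  - by rewrite eqxx.
  - by rewrite eqxx eq_sym (negbTE nij).
  - by do 2 rewrite ifN //.
move/eqP; rewrite addrC addr_eq0 => /eqP ->; done.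
Qed.
End Alg.

Section Block.
Variables (R : comNzRingType) (l : nat).
Variable h : forall n : nat, {ffun 'I_n -> 'rV[R]_(2 * l)} -> R.
Hypothesis Hh : forall k : nat, multilinear (@h k) /\ alternating (@h k).
Variables (D V : finType) (blk : D -> V) (n : V -> nat) (da : V -> nat -> D).
Hypothesis da_blk : forall v (j : 'I_(n v)), blk (da v j) = v.
Hypothesis da_inj : forall v (j k : 'I_(n v)), da v j = da v k -> j = k.
Hypothesis da_surj : forall v x, blk x = v -> exists j : 'I_(n v), da v j = x.

Definition HH (z : D -> 'rV[R]_(2 * l)) : R :=
  \prod_v @h (n v) [ffun j : 'I_(n v) => z (da v j)].

Lemma HH_ext z z' : z =1 z' -> HH z = HH z'.
Proof. by move=> E; apply: eq_bigr => v _; congr (@h _); apply/ffunP => j; rewrite !ffunE E. Qed.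

Lemma HH_tperm z x y : x != y -> blk x = blk y ->
  HH (fun u => z (tperm x y u)) = - HH z.
Proof.
move=> nxy bxy; rewrite /HH (bigD1 (blk x)) //= [in RHS](bigD1 (blk x)) //=.
rewrite -mulNr; congr (_ * _); last first.
  apply: eq_bigr => u ux; congr h; apply/ffunP => j; rewrite !ffunE.
  rewrite tpermD //; apply/eqP => E.
    by move: ux; rewrite E da_blk eqxx.
  by move: ux; rewrite bxy E da_blk eqxx.
set v := blk x.
have [j Ej] := da_surj (erefl v).
have [k Ek] := da_surj (esym bxy).
have njk : j != k by apply/eqP => E; move: nxy; rewrite -Ej -Ek E eqxx.
have [Hm Ha] := Hh (n v).
rewrite -(g_swap Hm Ha _ njk); congr h; apply/ffunP => m; rewrite !ffunE.
case: (tpermP j k m) => [->|->|/eqP nmj /eqP nmk]; rewrite -?Ej -?Ek ?tpermL ?tpermR //.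
rewrite tpermD //; apply/eqP => E.
  by move: nmj; rewrite (da_inj E) eqxx.
by move: nmk; rewrite (da_inj E) eqxx.
Qed.

Lemma HH_perm (b : {perm D}) : (forall x, blk (b x) = blk x) ->
  forall z, HH (fun u => z (b u)) = (-1) ^+ odd_perm b * HH z.
Proof.
have [N] := ubnP #|[pred x | b x != x]|; elim: N b => // N IHN b /ltnSE-le_b_N bb z.
case: (pickP (fun x => b x != x)) => [x bx | b_id]; last first.
  have -> : b = 1%g by apply/permP=> y; apply/eqP/idPn; rewrite perm1 b_id.
  by rewrite odd_perm1 expr0 mul1r; apply: HH_ext => u; rewrite perm1.
pose t := tperm x (b x).
pose c := (b * t)%g.
have bt : b = (c * t)%g by rewrite /c -mulgA tperm2 mulg1.
have cb : forall y, blk (c y) = blk y.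
  move=> y; rewrite permM /t; case: tpermP => [E|E|_ _]; first by rewrite bb -E bb.
    by rewrite -(bb x) -E bb.
  by rewrite bb.
rewrite (@HH_ext _ (fun u => (fun w => z (t w)) (c u))); last first.
  by move=> u; rewrite bt permM.
have Hc : (#|[pred y | c y != y]| < N)%N.
  rewrite (cardD1 x) !inE bx in le_b_N; apply: leq_ltn_trans le_b_N.
  apply: subset_leq_card; apply/subsetP=> y.
  rewrite !inE /c permM /t.
  have [-> | ne_yx] := eqVneq y x; first by rewrite tpermR eqxx.
  case: tpermP => [E|E|_ _] /=.
  - by move=> _; rewrite E eq_sym.
  - by move/perm_inj: E ne_yx => ->; rewrite eqxx.
  - by [].
have := IHN c Hc cb (fun w => z (t w)); rewrite /= => ->.
rewrite HH_tperm; last (by rewrite bb); last by rewrite eq_sym.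
by rewrite bt odd_permM odd_tperm eq_sym bx signr_addb expr1 mulrN mulrN1 mulNr.
Qed.

Lemma HH_scale (c : D -> R) z : HH (fun u => c u *: z u) = (\prod_u c u) * HH z.
Proof.
rewrite /HH.
under eq_bigr => v _.
  have [Hm _] := Hh (n v).
  rewrite (_ : [ffun j => _] = [ffun j : 'I_(n v) => c (da v j) *: [ffun j : 'I_(n v) => z (da v j)] j]);
    last by apply/ffunP => j; rewrite !ffunE.
  rewrite g_scale_all //.
  over.
rewrite big_split /=; congr (_ * _).
rewrite (partition_big blk xpredT) //=; apply: eq_bigr => v _.
have -> : \prod_(i | true && (blk i == v)) c i = \prod_(i in [set da v (nat_of_ord j) | j : 'I_(n v)]) c i.
  apply: eq_bigl => i; rewrite /=; apply/eqP/imsetP => [E|[j _ ->]]; last by rewrite da_blk.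
  by have [j Ej] := da_surj E; exists j.
rewrite big_imset //=; last by move=> j k _ _; apply: da_inj.
Qed.
End Block.

Section Perms.
Variable E : finType.
Local Notation D := (E * bool)%type.

Lemma pairN (a e : E) (b : bool) : a != e -> (a, b) != (e, b).
Proof. by apply: contra => /eqP [->]. Qed.

Lemma odd_perm_hom (L : {perm E} -> {perm D})
  (LM : forall s t, L (s * t)%g = (L s * L t)%g) (b : bool)
  (LT : forall a c : E, a != c -> odd_perm (L (tperm a c)) = b) s :
  odd_perm (L s) = b && odd_perm s.
Proof.
have [ts -> dts] := prod_tpermP s.
elim: ts dts => [_|t ts IH /= /andP[dt dts]].
  rewrite big_nil odd_perm1 andbF.
  by have := odd_permM (L 1%g) (L 1%g); rewrite -LM mulg1 addbb.
rewrite big_cons LM odd_permM LT // IH // odd_mul_tperm dt.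
by destruct b; case: (odd_perm _).
Qed.

Lemma liftF_inj (s : {perm E}) :
  injective (fun x : D => if x.2 then x else (s x.1, false)).
Proof.
move=> [a [|]] [c [|]] //=; try congruence.
by case=> /perm_inj ->.
Qed.
Definition liftF s := perm (@liftF_inj s).

Lemma lift2_inj (s : {perm E}) : injective (fun x : D => (s x.1, x.2)).
Proof. by move=> [a b] [c d] /= [/perm_inj -> ->]. Qed.
Definition lift2 s := perm (@lift2_inj s).

Lemma odd_liftF s : odd_perm (liftF s) = odd_perm s.
Proof.
rewrite (@odd_perm_hom liftF _ true) //.
  move=> s1 s2; apply/permP => -[a [|]]; rewrite !permM !permE //=.
move=> a c nac.
have -> : liftF (tperm a c) = tperm (a, false) (c, false).
  apply/permP => -[e [|]]; rewrite [in LHS]permE /=.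
    by rewrite tpermD // xpair_eqE andbF.
  case: tpermP => [->|->|/eqP ne1 /eqP ne2]; rewrite ?tpermL ?tpermR //.
  by rewrite tpermD // pairN // eq_sym.
by rewrite odd_tperm; apply/eqP => -[/eqP]; rewrite (negbTE nac).
Qed.

Lemma odd_lift2 s : odd_perm (lift2 s) = false.
Proof.
rewrite (@odd_perm_hom lift2 _ false) //.
  by move=> s1 s2; apply/permP => -[a b]; rewrite !permM !permE.
move=> a c nac.
have -> : lift2 (tperm a c) = (tperm (a, true) (c, true) * tperm (a, false) (c, false))%g.
  apply/permP => -[e b]; rewrite permM [in LHS]permE /=.
  have nca : c != a by rewrite eq_sym.
  case: (tpermP a c e) => [->|->|/eqP ne1 /eqP ne2]; case: b; rewrite !permE /=;
    repeat (rewrite ?xpair_eqE ?eqxx ?andbF ?andbT ?(negbTE nac) ?(negbTE nca) /=) => //.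
  - by repeat (rewrite ?xpair_eqE ?eqxx ?andbF ?andbT ?(negbTE ne1) ?(negbTE ne2) /=).
  - by repeat (rewrite ?xpair_eqE ?eqxx ?andbF ?andbT ?(negbTE ne1) ?(negbTE ne2) /=).
have nn (b : bool) : (a, b) != (c, b) by apply/eqP => -[/eqP]; rewrite (negbTE nac).
by rewrite odd_permM !odd_tperm !nn.
Qed.

Lemma odd_lift2' (r : {perm D}) (p : E -> E) :
  (forall x, r x = (p x.1, x.2)) -> odd_perm r = false.
Proof.
move=> Hr.
have pinj : injective p.
  by move=> a c E1; have := @perm_inj _ r (a, true) (c, true); rewrite !Hr E1 => /(_ erefl) [].
have -> : r = lift2 (perm pinj) by apply/permP => x; rewrite Hr !permE.
exact: odd_lift2.
Qed.

Lemma flip_inj (f : E -> bool) : injective (fun x : D => (x.1, x.2 (+) f x.1)).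
Proof.
move=> [a b] [c d] /= [E1]; rewrite -{}E1 => E2; congr pair.
by move: E2; case: b; case: d; case: (f a).
Qed.
Definition flipP f := perm (@flip_inj f).

Lemma sign_flip (R : comNzRingType) (f : E -> bool) :
  (-1) ^+ odd_perm (flipP f) = \prod_e (-1) ^+ f e :> R.
Proof.
have [N] := ubnP #|[pred e | f e]|; elim: N f => // N IHN f /ltnSE-le_N.
case: (pickP f) => [e0 fe0 | f0]; last first.
  have -> : flipP f = 1%g by apply/permP => -[a b]; rewrite permE perm1 /= f0 addbF.
  by rewrite odd_perm1 expr0 big1 // => e _; rewrite f0.
pose f' e := f e && (e != e0).
have -> : flipP f = (tperm (e0, true) (e0, false) * flipP f')%g.
  apply/permP => -[a b]; rewrite permM !permE /= /f'.
  have [->|nae] := eqVneq a e0.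
    by case: b; repeat (rewrite ?xpair_eqE ?eqxx ?andbF ?andbT /=); rewrite ?permE /= ?eqxx ?andbF fe0.
  repeat (rewrite ?xpair_eqE ?(negbTE nae) ?andbF ?andbT ?eqxx /=).
  by [].
rewrite (odd_permM (tperm (e0, true) (e0, false)) (flipP f')) odd_tperm signr_addb /= IHN; last first.
  rewrite (cardD1 e0) inE fe0 in le_N; apply: leq_ltn_trans le_N.
  apply: subset_leq_card; apply/subsetP => e; rewrite !inE /f' andbC.
  by [].
rewrite [in RHS](bigD1 e0) //= fe0 expr1; congr (_ * _).
  by rewrite xpair_eqE eqxx /= expr1.
rewrite (bigD1 e0) //= /f' eqxx andbF expr0 mul1r.
by apply: eq_bigr => e ne; rewrite ne andbT.
Qed.
End Perms.

Section Graph.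
Variables (V E : finType) (end1 end2 : E -> V).
Local Notation D := (E * bool)%type.
Local Notation dg := (deg end1 end2).

Definition blk (x : D) : V := if x.2 then end1 x.1 else end2 x.1.
Definition lab (om : E -> bool) (kin kout : E -> nat) (x : D) : nat :=
  if x.2 == om x.1 then kout x.1 else kin x.1.
Definition da (x0 : D) (om : E -> bool) (kin kout : E -> nat) (v : V) (j : nat) : D :=
  match arc_at end1 end2 om kin kout v j.+1 with
  | Some e => (e, if odd j.+1 then ~~ om e else om e)
  | None => x0 end.

Variables (om : E -> bool) (kin kout : E -> nat).
Hypothesis Hc : compatible_ordering end1 end2 om kin kout.
Hypothesis HG : eulerian end1 end2.
Local Notation hd := (Defs.head end1 end2 om).
Local Notation tl := (Defs.tail end1 end2 om).

Lemma blk_head e : blk (e, ~~ om e) = hd e.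
Proof. by rewrite /blk /Defs.head /=; case: (om e). Qed.
Lemma blk_tail e : blk (e, om e) = tl e.
Proof. by rewrite /blk /Defs.tail /=; case: (om e). Qed.
Lemma lab_head e : lab om kin kout (e, ~~ om e) = kin e.
Proof. by rewrite /lab /=; case: (om e). Qed.
Lemma lab_tail e : lab om kin kout (e, om e) = kout e.
Proof. by rewrite /lab /= eqxx. Qed.

Lemma C_in_inj v : {in [set e | hd e == v] &, injective kin}.
Proof. by case: (Hc v). Qed.
Lemma C_in e : odd (kin e) /\ (kin e < dg (hd e))%N.
Proof. by case: (Hc (hd e)) => _ [H _]; apply: H. Qed.
Lemma C_in_ex v i : odd i -> (i < dg v)%N -> exists e, hd e = v /\ kin e = i.
Proof. by case: (Hc v) => _ [_ [H _]]; apply: H. Qed.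
Lemma C_out_inj v : {in [set e | tl e == v] &, injective kout}.
Proof. by case: (Hc v) => _ [_ [_ [H _]]]. Qed.
Lemma C_out e : ~~ odd (kout e) /\ (0 < kout e <= dg (tl e))%N.
Proof. by case: (Hc (tl e)) => _ [_ [_ [_ [H _]]]]; apply: H. Qed.
Lemma C_out_ex v i : ~~ odd i -> (0 < i <= dg v)%N -> exists e, tl e = v /\ kout e = i.
Proof. by case: (Hc v) => _ [_ [_ [_ [_ H]]]]; apply: H. Qed.

Lemma arc_in v e : hd e = v -> arc_at end1 end2 om kin kout v (kin e) = Some e.
Proof.
move=> he; rewrite /arc_at (proj1 (C_in e)).
case: pickP => [e' /andP[/eqP he' /eqP ke'] | none].
  by congr Some; apply: (C_in_inj (v := v)); rewrite ?inE ?he ?he'.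
by have := none e; rewrite he !eqxx.
Qed.

Lemma arc_out v e : tl e = v -> arc_at end1 end2 om kin kout v (kout e) = Some e.
Proof.
move=> he; rewrite /arc_at (negbTE (proj1 (C_out e))).
case: pickP => [e' /andP[/eqP he' /eqP ke'] | none].
  by congr Some; apply: (C_out_inj (v := v)); rewrite ?inE ?he ?he'.
by have := none e; rewrite he !eqxx.
Qed.

Variable x0 : D.
Local Notation daa := (da x0 om kin kout).
Local Notation lb := (lab om kin kout).

Lemma arc_some v j : (j < dg v)%N ->
  exists e, arc_at end1 end2 om kin kout v j.+1 = Some e /\
            daa v j = (e, if odd j.+1 then ~~ om e else om e) /\
            (if odd j.+1 then hd e = v /\ kin e = j.+1 else tl e = v /\ kout e = j.+1).
Proof.
move=> jd; case oj: (odd j.+1).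
  have jd' : (j.+1 < dg v)%N.
    rewrite ltn_neqAle jd andbT; apply/eqP => E1; have := HG v.
    by rewrite -E1 oj.
  have [e [he ke]] := C_in_ex oj jd'.
  have Ha : arc_at end1 end2 om kin kout v j.+1 = Some e by rewrite -ke arc_in.
  by exists e; rewrite /da Ha oj.
have [e [he ke]] := C_out_ex (negbT oj) jd.
have Ha : arc_at end1 end2 om kin kout v j.+1 = Some e by rewrite -ke arc_out.
by exists e; rewrite /da Ha oj.
Qed.

Lemma P1 v j : (j < dg v)%N -> blk (daa v j) = v /\ lb (daa v j) = j.+1.
Proof.
move=> /arc_some [e [_ [-> H]]]; case: (odd j.+1) H => -[he ke].
  by rewrite blk_head lab_head.
by rewrite blk_tail lab_tail.
Qed.

Lemma P2 x : [/\ (0 < lb x)%N, ((lb x).-1 < dg (blk x))%N & daa (blk x) (lb x).-1 = x].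
Proof.
case: x => e b.
have [Hb|Hb] : b = om e \/ b = ~~ om e by case: b; case: (om e); auto.
  rewrite Hb blk_tail lab_tail; have [ok /andP[k0 kd]] := C_out e.
  split => //; first by rewrite -ltnS prednK.
  by rewrite /da prednK // arc_out // (negbTE ok).
rewrite Hb blk_head lab_head; have [ok kd] := C_in e.
have k0 : (0 < kin e)%N by case: (kin e) ok.
split => //; first exact: (leq_ltn_trans (leq_pred _) kd).
by rewrite /da prednK // arc_in // ok.
Qed.

Lemma da_blk v (j : 'I_(dg v)) : blk (daa v j) = v.
Proof. exact: (P1 (ltn_ord j)).1. Qed.

Lemma da_inj v (j k : 'I_(dg v)) : daa v j = daa v k -> j = k.
Proof.
move=> E1; apply: val_inj => /=.
have := (P1 (ltn_ord j)).2; rewrite E1 (P1 (ltn_ord k)).2.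
by case.
Qed.

Lemma da_surj v x : blk x = v -> exists j : 'I_(dg v), daa v j = x.
Proof.
move=> <-; have [_ H1 H2] := P2 x.
by exists (Ordinal H1).
Qed.

Definition zz (R : nzRingType) (l : nat) (idx : E -> nat) (x : D) : 'rV[R]_(2 * l) :=
  if x.2 == om x.1 then fvec R l (idx x.1) else evec R l (idx x.1).

Lemma local_argsE (R : nzRingType) (l : nat) (idx : E -> nat) v :
  local_args R l end1 end2 om kin kout idx v =
  [ffun j : 'I_(dg v) => zz R l idx (daa v j)].
Proof.
apply/ffunP => j; rewrite !ffunE.
have [e [-> [-> _]]] := arc_some (ltn_ord j).
rewrite /zz /=; case: (odd j) => /=; first by rewrite eqxx.
by case: (om e).
Qed.

Lemma ks_spec a : tl (ksucc end1 end2 om kin kout a) = hd a /\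
                  kout (ksucc end1 end2 om kin kout a) = (kin a).+1.
Proof.
have [oa ad] := C_in a.
have Hod : ~~ odd (kin a).+1 by rewrite /= oa.
have [b [tb kb]] := C_out_ex (v := hd a) Hod ad.
rewrite /ksucc; case: pickP => [b' /andP[/eqP -> /eqP ->] | none] //.
by have := none b; rewrite tb kb !eqxx.
Qed.

Lemma ks_inj : injective (ksucc end1 end2 om kin kout).
Proof.
move=> a a' E1; have [t1 k1] := ks_spec a; have [t2 k2] := ks_spec a'.
have hh : hd a = hd a' by rewrite -t1 -t2 E1.
apply: (C_in_inj (v := hd a)); rewrite ?inE ?hh //.
by apply/eq_add_S; rewrite -k1 -k2 E1.
Qed.

Definition ks := perm ks_inj.

Lemma ncirc_porbits : ncircuits end1 end2 om kin kout = #|porbits ks|.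
Proof.
rewrite /ncircuits /porbits; congr #|pred_of_set _|.
apply: eq_imset => a; apply/setP => b; rewrite inE.
have Eit n : iter n (ksucc end1 end2 om kin kout) a = (ks ^+ n)%g a.
  by rewrite permX; apply: eq_iter => y; rewrite permE.
apply/idP/porbitP => [Hf | [i ->]].
  by exists (findex (ksucc end1 end2 om kin kout) a b); rewrite -Eit iter_findex.
by rewrite -Eit fconnect_iter.
Qed.

Lemma sign_ncirc (R : pzRingType) :
  (-1) ^+ ncircuits end1 end2 om kin kout = (-1) ^+ #|E| * (-1) ^+ odd_perm ks :> R.
Proof.
rewrite -signr_odd -[in X in X * _]signr_odd -signr_addb ncirc_porbits /odd_perm.
by congr (_ ^+ _); rewrite addKb.
Qed.

Definition wP := (liftF ks * flipP om)%g.

Lemma wP_true e : wP (e, true) = (e, ~~ om e).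
Proof. by rewrite permM !permE /=. Qed.
Lemma wP_false e : wP (e, false) =
  (ksucc end1 end2 om kin kout e, om (ksucc end1 end2 om kin kout e)).
Proof. by rewrite permM !permE /=. Qed.

End Graph.

Section Two.
Variables (R : comNzRingType) (l : nat).
Variable h : forall n : nat, {ffun 'I_n -> 'rV[R]_(2 * l)} -> R.
Hypothesis Hh : forall k : nat, multilinear (@h k) /\ alternating (@h k).
Variables (V E : finType) (end1 end2 : E -> V).
Hypothesis HG : eulerian end1 end2.
Variable phi : E -> 'I_l.
Local Notation D := (E * bool)%type.
Local Notation dg := (deg end1 end2).
Variable x0 : D.

Definition idx (ps : {ffun E -> bool}) (e : E) : nat := (phi e + l * ps e)%N.

Lemma s_hphiE om kin kout (Hc : compatible_ordering end1 end2 om kin kout) :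
  s_hphi h end1 end2 phi om kin kout =
  (-1) ^+ ncircuits end1 end2 om kin kout *
  \sum_(ps : {ffun E -> bool}) HH h dg (da end1 end2 x0 om kin kout) (zz om R l (idx ps)).
Proof.
rewrite /s_hphi; congr (_ * _); apply: eq_bigr => ps _; apply: eq_bigr => v _.
by rewrite (local_argsE Hc HG x0).
Qed.

Variables (om1 : E -> bool) (kin1 kout1 : E -> nat).
Variables (om2 : E -> bool) (kin2 kout2 : E -> nat).
Hypothesis Hc1 : compatible_ordering end1 end2 om1 kin1 kout1.
Hypothesis Hc2 : compatible_ordering end1 end2 om2 kin2 kout2.
Local Notation d1 := (da end1 end2 x0 om1 kin1 kout1).
Local Notation d2 := (da end1 end2 x0 om2 kin2 kout2).
Local Notation lab1 := (lab om1 kin1 kout1).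
Local Notation lab2 := (lab om2 kin2 kout2).
Local Notation blk := (blk end1 end2).

Definition bfun (x : D) : D := d2 (blk x) (lab1 x).-1.

Lemma b_blk_lab x : blk (bfun x) = blk x /\ lab2 (bfun x) = lab1 x.
Proof.
have [l0 ld _] := P2 Hc1 x0 x.
have [-> ->] := P1 Hc2 HG x0 ld.
by rewrite prednK.
Qed.

Lemma bfun_inj : injective bfun.
Proof.
move=> x y E1.
have [bx lx] := b_blk_lab x; have [by' ly] := b_blk_lab y.
have bb : blk x = blk y by rewrite -bx -by' E1.
have ll : lab1 x = lab1 y by rewrite -lx -ly E1.
have [_ _ Hx] := P2 Hc1 x0 x; have [_ _ Hy] := P2 Hc1 x0 y.
by rewrite -Hx -Hy bb ll.
Qed.

Definition bet := perm bfun_inj.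

Lemma bet_blk x : blk (bet x) = blk x.
Proof. by rewrite permE; case: (b_blk_lab x). Qed.

Lemma bet_da v (j : 'I_(dg v)) : bet (d1 v j) = d2 v j.
Proof.
rewrite permE /bfun; have [-> ->] := P1 Hc1 HG x0 (ltn_ord j).
by [].
Qed.

Lemma HH21 z : HH h dg d2 z = HH h dg d1 (fun x => z (bet x)).
Proof.
by apply: eq_bigr => v _; congr (@h _); apply/ffunP => j; rewrite !ffunE bet_da.
Qed.

Local Notation hd1 := (Defs.head end1 end2 om1).
Local Notation hd2 := (Defs.head end1 end2 om2).
Local Notation tl2 := (Defs.tail end1 end2 om2).

Lemma bet_wP e : exists e2,
  bet (wP Hc1 (e, true)) = wP Hc2 (e2, true) /\ bet (wP Hc1 (e, false)) = wP Hc2 (e2, false).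
Proof.
have [oe ed] := C_in Hc1 e.
have k0 : (0 < kin1 e)%N by case: (kin1 e) oe.
have ed' : ((kin1 e).-1 < dg (hd1 e))%N by exact: (leq_ltn_trans (leq_pred _) ed).
have [e2 [_ [Hd2 He2]]] := arc_some Hc2 HG x0 ed'.
rewrite prednK // oe in Hd2 He2; case: He2 => [h2 k2].
exists e2; split.
  by rewrite wP_true permE /bfun blk_head lab_head Hd2 wP_true.
rewrite wP_false wP_false permE /bfun.
have [t1 kk1] := ks_spec Hc1 e.
rewrite blk_tail lab_tail t1 kk1 /=.
have ed2 : (kin1 e < dg (hd1 e))%N by [].
have [e3 [_ [Hd3 He3]]] := arc_some Hc2 HG x0 ed2.
rewrite /= oe /= in Hd3 He3; rewrite Hd3; case: He3 => [t3 k3].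
have [t4 k4] := ks_spec Hc2 e2.
suff -> : e3 = ksucc end1 end2 om2 kin2 kout2 e2 by [].
apply: (C_out_inj Hc2 (v := hd1 e)); rewrite ?inE ?t3 ?t4 ?h2 //.
by rewrite k3 k4 k2.
Qed.

Lemma odd_bet : odd_perm bet = odd_perm (wP Hc1) (+) odd_perm (wP Hc2).
Proof.
pose rho := (wP Hc1 * bet * (wP Hc2)^-1)%g.
pose p e := (rho (e, true)).1.
have Hr : forall x, rho x = (p x.1, x.2).
  move=> [e b]; rewrite /p /rho; have [e2 [E1 E2]] := bet_wP e.
  by case: b; rewrite /= !(permM (wP Hc1 * bet)%g) !(permM (wP Hc1) bet) ?E1 ?E2 !permK.
have H := odd_lift2' Hr.
rewrite /rho odd_permM (odd_permM (wP Hc1)) odd_permV in H.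
move: H; by case: (odd_perm (wP Hc1)); case: (odd_perm bet); case: (odd_perm (wP Hc2)).
Qed.

Lemma sq_sign (n : nat) : (-1) ^+ n * (-1) ^+ n = 1 :> R.
Proof. by rewrite -signr_odd -signr_addb addbb. Qed.

Definition dlt (e : E) : bool := om1 e != om2 e.

Lemma sign_bet : (-1) ^+ odd_perm bet =
  (-1) ^+ ncircuits end1 end2 om1 kin1 kout1 * (-1) ^+ ncircuits end1 end2 om2 kin2 kout2 *
  \prod_e (-1) ^+ dlt e :> R.
Proof.
have sgnX (a b : bool) : (-1) ^+ (a (+) b) = (-1) ^+ a * (-1) ^+ b :> R.
  by case: a; case: b; rewrite /= ?expr0 ?expr1 ?mulr1 ?mul1r ?mulrN1 ?opprK.
rewrite odd_bet (sgnX (odd_perm (wP Hc1))) /wP.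
rewrite (odd_permM (liftF (ks Hc1))) (odd_permM (liftF (ks Hc2))) !odd_liftF.
rewrite (sgnX (odd_perm (ks Hc1))) (sgnX (odd_perm (ks Hc2))).
rewrite !(sign_flip R) !(sign_ncirc _ R).
have -> : \prod_e (-1) ^+ dlt e = \prod_e (-1) ^+ om1 e * \prod_e ((-1) ^+ om2 e) :> R.
  by rewrite -big_split /=; apply: eq_bigr => e _; rewrite /dlt negb_eqb signr_addb.
set a := (-1) ^+ #|E|.
set s1 := (-1) ^+ odd_perm _; set s2 := (-1) ^+ odd_perm _.
have aa : a * a = 1 by rewrite sq_sign.
set P1 := \prod_e _; set P2 := \prod_e _.
transitivity (a * a * (s1 * P1 * (s2 * P2))); first by rewrite aa mul1r.
ring.
Qed.

Definition tr (ps : {ffun E -> bool}) : {ffun E -> bool} := [ffun e => ps e (+) dlt e].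
Lemma tr_inj : injective tr.
Proof.
move=> p q E1; apply/ffunP => e; have := congr1 (fun f : {ffun E -> bool} => f e) E1.
by rewrite /tr !ffunE => /addIb.
Qed.

Definition cc (ps : {ffun E -> bool}) (x : D) : R :=
  (-1) ^+ (dlt x.1 && (ps x.1 == (x.2 != om1 x.1))).

Lemma fvec_lo k : (k < l)%N -> fvec R l k = - evec R l (k + l).
Proof. by move=> kl; rewrite /fvec kl. Qed.
Lemma fvec_hi k : fvec R l (k + l) = evec R l k.
Proof. by rewrite /fvec ltnNge leq_addl /= addnK. Qed.

Lemma zz_tr ps x : zz om2 R l (idx (tr ps)) x = cc ps x *: zz om1 R l (idx ps) x.
Proof.
case: x => e b; rewrite /zz /cc /idx /tr ffunE /dlt /=.
have pl := ltn_ord (phi e).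
case: (om1 e); case: (om2 e); case: (ps e); case: b;
  rewrite /= ?muln1 ?muln0 ?addn0 ?fvec_hi ?(fvec_lo pl) ?expr0 ?expr1 ?scale1r ?scaleN1r ?opprK //.
Qed.

Lemma prod_cc ps : \prod_x cc ps x = \prod_e (-1) ^+ dlt e.
Proof.
transitivity (\prod_(p : D) cc ps (p.1, p.2)); first by apply: eq_bigr => -[].
rewrite -(pair_bigA _ (fun e b => cc ps (e, b))) /=.
apply: eq_bigr => e _; rewrite big_bool /cc /=.
by case: (dlt e); case: (ps e); case: (om1 e); rewrite /= ?expr0 ?expr1 ?mulr1 ?mul1r.
Qed.

Lemma term_eq ps :
  HH h dg d2 (zz om2 R l (idx (tr ps))) =
  (\prod_e (-1) ^+ dlt e) * (-1) ^+ odd_perm bet * HH h dg d1 (zz om1 R l (idx ps)).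
Proof.
rewrite (@HH_ext R l h D V dg d2 _ (fun x => cc ps x *: zz om1 R l (idx ps) x) (zz_tr ps)).
rewrite (HH_scale Hh (da_blk Hc2 HG x0) (@da_inj _ _ _ _ _ _ _ Hc2 HG x0) (da_surj Hc2 x0)) prod_cc HH21.
by rewrite (HH_perm Hh (da_blk Hc1 HG x0) (@da_inj _ _ _ _ _ _ _ Hc1 HG x0) (da_surj Hc1 x0) bet_blk) mulrA.
Qed.

Lemma main2 : s_hphi h end1 end2 phi om1 kin1 kout1 = s_hphi h end1 end2 phi om2 kin2 kout2.
Proof.
rewrite (s_hphiE Hc1) (s_hphiE Hc2) [in RHS](reindex_inj tr_inj) /=.
under [in RHS]eq_bigr => ps _ do rewrite term_eq.
rewrite -[in RHS]mulr_sumr sign_bet.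
set F := \prod_e _; set c1 := (-1) ^+ ncircuits _ _ _ _ _; set c2 := (-1) ^+ ncircuits _ _ _ _ _.
set S := \sum_ps _.
have FF : F * F = 1.
  by rewrite /F -big_split /=; apply: big1 => e _; rewrite sq_sign.
have C2 : c2 * c2 = 1 by rewrite sq_sign.
transitivity ((c2 * c2) * (F * F) * (c1 * S)); first by rewrite FF C2 !mul1r.
ring.
Qed.
End Two.


Unset Implicit Arguments.
Set Strict Implicit.

Theorem lemma2 (R : numClosedFieldType) (l : nat)
  (h : forall n : nat, {ffun 'I_n -> 'rV[R]_(2 * l)} -> R)
  (Hh : exterior_form h)
  (V E : finType) (end1 end2 : E -> V)
  (HG : eulerian end1 end2)
  (phi : E -> 'I_l)
  (om1 : E -> bool) (kin1 kout1 : E -> nat)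
  (om2 : E -> bool) (kin2 kout2 : E -> nat) :
  eulerian_orientation end1 end2 om1 ->
  compatible_ordering end1 end2 om1 kin1 kout1 ->
  eulerian_orientation end1 end2 om2 ->
  compatible_ordering end1 end2 om2 kin2 kout2 ->
  s_hphi h end1 end2 phi om1 kin1 kout1 = s_hphi h end1 end2 phi om2 kin2 kout2.
Proof.
move=> _ Hc1 _ Hc2.
case: (pickP (@predT E)) => [e0 _ | E0].
  exact: (main2 Hh HG phi (e0, true) Hc1 Hc2).
have Ha : forall om kin kout v i, arc_at end1 end2 om kin kout v i = None.
  move=> om kin kout v i; rewrite /arc_at.
  by case: ifP => _; case: pickP => // e; have := E0 e.
have Hn : forall om kin kout, ncircuits end1 end2 om kin kout = 0%N.
  move=> om kin kout; apply/eqP; rewrite cards_eq0; apply/eqP/setP => S.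
  by rewrite inE; apply/imsetP => -[a]; have := E0 a.
rewrite /s_hphi !Hn; congr (_ * _); apply: eq_bigr => ps _; apply: eq_bigr => v _.
by congr (h _); apply/ffunP => j; rewrite !ffunE !Ha.
Qed.
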